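(* Let $\{(X_n,M_n,\cdot)\}_{n\in\mathbb N}$ be a sequence of nonempty compact non-Archimedean fuzzy metric spaces with the product $t$-norm $\cdot$, satisfying: (1) there exists a nondecreasing left-continuous function $C:(0,\infty)\to(0,1]$ with $0<C(s)\le\mathrm{diam}_s(X_n)$ for all $s>0$ and all $n$; (2) for every $t>0$ and $0<\varepsilon<1$ there is $N(\varepsilon,t)\in\mathbb N$ with $\mathrm{Cov}(X_n,\varepsilon,t)\le N(\varepsilon,t)$ for all $n$; (3) for every $t>0$ and $0<\varepsilon<1$, with $N=N(\varepsilon,t)$, there exist, for each $n$, a $(t,\varepsilon)$-net $\{x_i^n\}_{i=1}^N$ in $X_n$ such that for all $n,m$, all $s>t$ and all $i,j\in\{1,\dots,N\}$: if $M_n(x_i^n,x_j^n,s)<M_m(x_i^m,x_j^m,s)$ then $\dfrac{M_n(x_i^n,x_j^n,s)}{M_m(x_i^m,x_j^m,s)}\ge\dfrac{M_n(x_i^n,x_j^n,t)}{M_m(x_i^m,x_j^m,t)}$. Then for every $t>0$ and $0<\varepsilon<1$ there is a subsequence $\{X_{n_k}\}_k$ with $M_{GH}(X_{n_j},X_{n_k},t)>(1-\varepsilon)^2$ for all $j,k$; and consequently $\{(X_n,M_n,\cdot)\}_n$ has a Cauchy subsequence with respect to $M_{GH}$.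
   Context: A fuzzy metric space $(X,M,\cdot)$ with the product $t$-norm: $M:X\times X\times[0,\infty)\to[0,1]$ with, for all $x,y,z$ and $t,s>0$: (KM1) $M(x,y,0)=0$; (KM2) $M(x,y,t)=1$ for all $t>0$ iff $x=y$; (KM3) $M(x,y,t)=M(y,x,t)$; (KM4) $M(x,y,t)\cdot M(y,z,s)\le M(x,z,t+s)$; (KM5) $M(x,y,\cdot)$ left continuous on $[0,\infty)$. Non-Archimedean: $M(x,z,\max\{t,s\})\ge M(x,y,t)\cdot M(y,z,s)$. Balls $B(x,\varepsilon,t)=\{y: M(x,y,t)>1-\varepsilon\}$ generate the topology; ''compact'' refers to it. $H_M(A,B,t)=\min\{\inf_{a\in A}\sup_{b\in B}M(a,b,t),\ \inf_{b\in B}\sup_{a\in A}M(a,b,t)\}$ for nonempty compact $A,B$. A fuzzy metric on the disjoint union $X\sqcup Y$ is admissible if it restricts to the given ones on $X$ and $Y$; $M_{GH}(X,Y,t)=\sup\{H_M(X,Y,t): M$ admissible non-Archimedean fuzzy metric on $X\sqcup Y$ with the same $t$-norm$\}$. A sequence $(X_n)$ is Cauchy w.r.t. $M_{GH}$ if for every $t>0$, $0<\varepsilon<1$ there is $n_0$ with $M_{GH}(X_n,X_m,t)>1-\varepsilon$ for all $n,m\ge n_0$. A family $\{x_i\}_{i=1}^N$ is a $(t,\varepsilon)$-net in $X$ if each $x\in X$ has some $i$ with $M(x,x_i,t)>1-\varepsilon$. $\mathrm{Cov}(X,\varepsilon,t)$ is the minimal cardinality of $C\subseteq X$ with $X=\bigcup_{c\in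 C}B(c,\varepsilon,t)$. $\mathrm{diam}_s(X)=\inf\{M(x,y,s):x,y\in X\}$. *)

(* Defs.v *)
From Stdlib Require Import Reals Lra List.
From Coquelicot Require Import Coquelicot.
Open Scope R_scope.

(* A fuzzy metric space (X, M, .) with the product t-norm (KM1)-(KM5).
   M is only meaningful on t in [0, oo); nothing is required for t < 0. *)
Definition is_fuzzy_metric_prod (X : Type) (M : X -> X -> R -> R) : Prop :=
  (forall x y t, 0 <= t -> 0 <= M x y t <= 1) /\
  (forall x y, M x y 0 = 0) /\
  (forall x y, (forall t, 0 < t -> M x y t = 1) <-> x = y) /\
  (forall x y t, 0 <= t -> M x y t = M y x t) /\
  (forall x y z t s, 0 < t -> 0 < s -> M x y t * M y z s <= M x z (t + s)) /\
  (forall x y t, 0 < t -> forall e, 0 < e -> exists d, 0 < d /\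
     forall s, 0 <= s -> t - d < s -> s <= t -> Rabs (M x y s - M x y t) < e).

Definition is_nA_fuzzy_metric_prod (X : Type) (M : X -> X -> R -> R) : Prop :=
  is_fuzzy_metric_prod X M /\
  (forall x y z t s, 0 < t -> 0 < s -> M x y t * M y z s <= M x z (Rmax t s)).

Definition ball_f {X : Type} (M : X -> X -> R -> R) (x : X) (eps t : R) (y : X) : Prop :=
  M x y t > 1 - eps.

Definition f_open {X : Type} (M : X -> X -> R -> R) (U : X -> Prop) : Prop :=
  forall x, U x -> exists eps t, 0 < eps < 1 /\ 0 < t /\
    forall y, ball_f M x eps t y -> U y.

Definition f_compact_space (X : Type) (M : X -> X -> R -> R) : Prop :=
  forall (I : Type) (U : I -> X -> Prop),
    (forall i, f_open M (U i)) -> (forall x, exists i, U i x) ->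
    exists l : list I, forall x, exists i, In i l /\ U i x.

Definition sup_img {A : Type} (f : A -> R) : Rbar := Lub_Rbar (fun v => exists a, v = f a).
Definition inf_img {A : Type} (f : A -> R) : Rbar := Glb_Rbar (fun v => exists a, v = f a).

Definition diam_s {X : Type} (M : X -> X -> R -> R) (s : R) : Rbar :=
  inf_img (fun p : X * X => M (fst p) (snd p) s).

Definition is_ball_cover {X : Type} (M : X -> X -> R -> R) (eps t : R) (l : list X) : Prop :=
  forall x, exists c, In c l /\ ball_f M c eps t x.

(* Cov(X, eps, t) = k : k is the minimal cardinality of a subset C of X
   whose balls B(c,eps,t) cover X (finite subsets represented by duplicate-free lists) *)
Definition Cov_is {X : Type} (M : X -> X -> R -> R) (eps t : R) (k : nat) : Prop :=
  (exists l, NoDup l /\ length l = k /\ is_ball_cover M eps t l) /\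
  (forall l, NoDup l -> is_ball_cover M eps t l -> (k <= length l)%nat).

(* {x_i}_{i=1}^N (indexed here by i = 0..N-1) is a (t,eps)-net *)
Definition is_net {X : Type} (M : X -> X -> R -> R) (t eps : R) (N : nat) (x : nat -> X) : Prop :=
  forall y, exists i, (i < N)%nat /\ M y (x i) t > 1 - eps.

(* H_M(X, Y, t) for X, Y embedded in the disjoint union X + Y.
   The inner sups are finite (values in [0,1], spaces nonempty); [real] converts them. *)
Definition H_M {X Y : Type} (Mu : X + Y -> X + Y -> R -> R) (t : R) : Rbar :=
  Rbar_min
    (inf_img (fun a : X => real (sup_img (fun b : Y => Mu (inl a) (inr b) t))))
    (inf_img (fun b : Y => real (sup_img (fun a : X => Mu (inl a) (inr b) t)))).

Definition admissible {X Y : Type} (MX : X -> X -> R -> R) (MY : Y -> Y -> R -> R)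
  (Mu : X + Y -> X + Y -> R -> R) : Prop :=
  is_nA_fuzzy_metric_prod (X + Y) Mu /\
  (forall a b t, 0 <= t -> Mu (inl a) (inl b) t = MX a b t) /\
  (forall a b t, 0 <= t -> Mu (inr a) (inr b) t = MY a b t).

Definition M_GH {X Y : Type} (MX : X -> X -> R -> R) (MY : Y -> Y -> R -> R) (t : R) : Rbar :=
  Lub_Rbar (fun v => exists Mu : X + Y -> X + Y -> R -> R,
    admissible MX MY Mu /\ Finite v = H_M Mu t).

Definition GH_Cauchy (X : nat -> Type) (M : forall n, X n -> X n -> R -> R) : Prop :=
  forall t eps, 0 < t -> 0 < eps < 1 ->
    exists n0, forall n m, (n0 <= n)%nat -> (n0 <= m)%nat ->
      Rbar_lt (Finite (1 - eps)) (M_GH (M n) (M m) t).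

Definition strictly_increasing (phi : nat -> nat) : Prop :=
  forall k, (phi k < phi (S k))%nat.

(* Main.v *)
Require Import Defs.
From Stdlib Require Import Reals Lra Lia List.
From Coquelicot Require Import Coquelicot.
Open Scope R_scope.

Lemma lub_bounded (E : R -> Prop) (e0 B : R) :
  E e0 -> (forall x, E x -> x <= B) ->
  exists l, Lub_Rbar E = Finite l /\ l <= B /\ forall x, E x -> x <= l.
Proof.
  intros H0 HB. destruct (Lub_Rbar_correct E) as [Hub Hl].
  assert (H1 : Rbar_le (Lub_Rbar E) B) by (apply Hl; intros x Hx; simpl; auto).
  assert (H2 := Hub e0 H0).
  destruct (Lub_Rbar E) as [l| |]; simpl in *; try contradiction.
  exists l; repeat split; auto.
Qed.

Lemma glb_bounded (E : R -> Prop) (e0 L : R) :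
  E e0 -> (forall x, E x -> L <= x) ->
  exists l, Glb_Rbar E = Finite l /\ L <= l.
Proof.
  intros H0 HB. destruct (Glb_Rbar_correct E) as [Hlb Hl].
  assert (H1 : Rbar_le L (Glb_Rbar E)) by (apply Hl; intros x Hx; simpl; auto).
  assert (H2 := Hlb e0 H0).
  destruct (Glb_Rbar E) as [l| |]; simpl in *; try contradiction.
  exists l; split; auto.
Qed.

Lemma glb_le (E : R -> Prop) (x : R) : E x -> Rbar_le (Glb_Rbar E) x.
Proof. intros H. destruct (Glb_Rbar_correct E) as [Hlb _]. exact (Hlb x H). Qed.

Fixpoint fmaxN (g : nat -> R) (N : nat) : R :=
  match N with O => 0 | S k => Rmax (fmaxN g k) (g k) end.

Lemma fmaxN_ge (g : nat -> R) N i : (i < N)%nat -> g i <= fmaxN g N.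
Proof.
  induction N; intros H; [lia|]. simpl.
  destruct (Nat.eq_dec i N) as [->|Hne].
  - apply Rmax_r.
  - eapply Rle_trans; [apply IHN; lia| apply Rmax_l].
Qed.

Lemma fmaxN_nonneg g N : 0 <= fmaxN g N.
Proof. induction N; simpl; [lra|]. eapply Rle_trans; [exact IHN|apply Rmax_l]. Qed.

Lemma fmaxN_cases g N : fmaxN g N = 0 \/ exists i, (i < N)%nat /\ fmaxN g N = g i.
Proof.
  induction N; simpl; [auto|].
  unfold Rmax. destruct (Rle_dec (fmaxN g N) (g N)).
  - right. exists N. split; auto.
  - destruct IHN as [H|[i [Hi H]]].
    + left; exact H.
    + right; exists i; split; [lia|exact H].
Qed.

Lemma fmaxN_le g N B : 0 <= B -> (forall i, (i < N)%nat -> g i <= B) -> fmaxN g N <= B.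
Proof.
  intros HB H. destruct (fmaxN_cases g N) as [E|[i [Hi E]]]; rewrite E; auto.
Qed.

Definition LC (f : R -> R) (t : R) : Prop :=
  forall e, 0 < e -> exists d, 0 < d /\
    forall s, 0 <= s -> t - d < s -> s <= t -> Rabs (f s - f t) < e.

Lemma Rabs_max_diff a b a' b' :
  Rabs (Rmax a b - Rmax a' b') <= Rmax (Rabs (a - a')) (Rabs (b - b')).
Proof.
  set (m := Rmax (Rabs (a - a')) (Rabs (b - b'))).
  assert (H1 : Rabs (a - a') <= m) by apply Rmax_l.
  assert (H2 : Rabs (b - b') <= m) by apply Rmax_r.
  apply Rabs_le_between in H1. apply Rabs_le_between in H2.
  apply Rabs_le_between.
  pose proof (Rmax_l a b). pose proof (Rmax_r a b).
  pose proof (Rmax_l a' b'). pose proof (Rmax_r a' b').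
  assert (Rmax a b = a \/ Rmax a b = b) as [E|E] by (unfold Rmax; destruct Rle_dec; auto);
  assert (Rmax a' b' = a' \/ Rmax a' b' = b') as [E'|E'] by (unfold Rmax; destruct Rle_dec; auto); lra.
Qed.

Lemma LC_max f g t : LC f t -> LC g t -> LC (fun s => Rmax (f s) (g s)) t.
Proof.
  intros Hf Hg e He. destruct (Hf e He) as [d1 [Hd1 H1]]. destruct (Hg e He) as [d2 [Hd2 H2]].
  exists (Rmin d1 d2). split; [apply Rmin_pos; auto|]. intros s Hs Hl Hr.
  eapply Rle_lt_trans; [apply Rabs_max_diff|].
  apply Rmax_lub_lt; [apply H1|apply H2]; auto;
  pose proof (Rmin_l d1 d2); pose proof (Rmin_r d1 d2); lra.
Qed.

Lemma LC_const c t : LC (fun _ => c) t.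
Proof. intros e He. exists 1. split; [lra|]. intros. rewrite Rminus_diag, Rabs_R0. auto. Qed.

Lemma LC_fmaxN (g : nat -> R -> R) N t : (forall i, (i < N)%nat -> LC (g i) t) ->
  LC (fun s => fmaxN (fun i => g i s) N) t.
Proof.
  induction N; intros H; simpl.
  - apply LC_const.
  - apply LC_max; [apply IHN; intros; apply H; lia| apply H; lia].
Qed.

Lemma LC_mult f g t :
  (forall s, 0 < s -> Rabs (f s) <= 1) -> (forall s, 0 < s -> Rabs (g s) <= 1) -> 0 < t ->
  LC f t -> LC g t -> LC (fun s => f s * g s) t.
Proof.
  intros Bf Bg Ht Hf Hg e He.
  destruct (Hf (e/2)) as [d1 [Hd1 H1]]; [lra|]. destruct (Hg (e/2)) as [d2 [Hd2 H2]]; [lra|].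
  exists (Rmin (Rmin d1 d2) t). split; [apply Rmin_pos; [apply Rmin_pos|]; auto|]. intros s Hs Hl Hr.
  pose proof (Rmin_l d1 d2); pose proof (Rmin_r d1 d2).
  pose proof (Rmin_l (Rmin d1 d2) t); pose proof (Rmin_r (Rmin d1 d2) t).
  assert (A1 : Rabs (f s - f t) < e/2) by (apply H1; lra).
  assert (A2 : Rabs (g s - g t) < e/2) by (apply H2; lra).
  replace (f s * g s - f t * g t) with ((f s - f t) * g s + f t * (g s - g t)) by ring.
  eapply Rle_lt_trans; [apply Rabs_triang|]. rewrite !Rabs_mult.
  pose proof (Bg s ltac:(lra)). pose proof (Bf t Ht).
  pose proof (Rabs_pos (f s - f t)). pose proof (Rabs_pos (g s - g t)).
  pose proof (Rabs_pos (g s)). pose proof (Rabs_pos (f t)).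
  assert (Rabs (f s - f t) * Rabs (g s) <= Rabs (f s - f t)) by nra.
  assert (Rabs (f t) * Rabs (g s - g t) <= Rabs (g s - g t)) by nra.
  lra.
Qed.


Lemma LC_ext f g t : LC f t -> 0 < t -> (forall s, 0 < s -> g s = f s) -> LC g t.
Proof.
  intros Hf Ht E e He. destruct (Hf e He) as [d [Hd H]].
  exists (Rmin d t). split; [apply Rmin_pos; auto|]. intros s Hs Hl Hr.
  pose proof (Rmin_l d t); pose proof (Rmin_r d t).
  rewrite !E by lra. apply H; lra.
Qed.

Lemma Rabs01 x : 0 <= x <= 1 -> Rabs x <= 1.
Proof. intros. rewrite Rabs_pos_eq; lra. Qed.

Lemma fm_range X M : is_nA_fuzzy_metric_prod X M -> forall x y t, 0 <= t -> 0 <= M x y t <= 1.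
Proof. intros [[H _] _]. exact H. Qed.
Lemma fm_zero X M : is_nA_fuzzy_metric_prod X M -> forall x y, M x y 0 = 0.
Proof. intros [[_ [H _]] _]. exact H. Qed.
Lemma fm_self X M : is_nA_fuzzy_metric_prod X M -> forall x t, 0 < t -> M x x t = 1.
Proof. intros [[_ [_ [H _]]] _] x t Ht. apply (proj2 (H x x)); auto. Qed.
Lemma fm_sym X M : is_nA_fuzzy_metric_prod X M -> forall x y t, 0 <= t -> M x y t = M y x t.
Proof. intros [[_ [_ [_ [H _]]]] _]. exact H. Qed.
Lemma fm_km2 X M : is_nA_fuzzy_metric_prod X M -> forall x y, (forall t, 0 < t -> M x y t = 1) <-> x = y.
Proof. intros [[_ [_ [H _]]] _]. exact H. Qed.
Lemma fm_lc X M : is_nA_fuzzy_metric_prod X M -> forall x y t, 0 < t -> LC (M x y) t.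
Proof. intros [[_ [_ [_ [_ [_ H]]]]] _]. exact H. Qed.
Lemma fm_nA0 X M : is_nA_fuzzy_metric_prod X M -> forall x y z t s, 0 < t -> 0 < s ->
  M x y t * M y z s <= M x z (Rmax t s).
Proof. intros [_ H]. exact H. Qed.

Lemma fm_mono X M : is_nA_fuzzy_metric_prod X M -> forall x y t t', 0 < t -> t <= t' ->
  M x y t <= M x y t'.
Proof.
  intros H x y t t' Ht Htt.
  pose proof (fm_nA0 X M H x y y t t' Ht ltac:(lra)).
  rewrite (fm_self X M H y t') in H0 by lra. rewrite Rmult_1_r in H0.
  rewrite Rmax_right in H0 by lra. exact H0.
Qed.

Lemma fm_nA X M : is_nA_fuzzy_metric_prod X M -> forall x y z t s u, 0 < t -> 0 < s ->
  Rmax t s <= u -> M x y t * M y z s <= M x z u.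
Proof.
  intros H x y z t s u Ht Hs Hu. eapply Rle_trans; [apply fm_nA0; auto|].
  apply fm_mono; auto. apply (Rlt_le_trans _ t); auto; apply Rmax_l.
Qed.

Lemma le3 a b c a' b' c' : 0 <= a -> 0 <= b -> 0 <= c -> a <= a' -> b <= b' -> c <= c' ->
  a * b * c <= a' * b' * c'.
Proof.
  intros. apply Rmult_le_compat; try apply Rmult_le_compat; auto; try lra.
  apply Rmult_le_pos; auto.
Qed.

(* generic: nA + self-distance 1 implies the usual triangle inequality *)
Lemma nA_to_fm (Z : Type) (Mu : Z -> Z -> R -> R) :
  (forall x y t, 0 <= t -> 0 <= Mu x y t <= 1) ->
  (forall x y, Mu x y 0 = 0) ->
  (forall x y, (forall t, 0 < t -> Mu x y t = 1) <-> x = y) ->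
  (forall x y t, 0 <= t -> Mu x y t = Mu y x t) ->
  (forall x y t, 0 < t -> LC (Mu x y) t) ->
  (forall x y z t s, 0 < t -> 0 < s -> Mu x y t * Mu y z s <= Mu x z (Rmax t s)) ->
  is_nA_fuzzy_metric_prod Z Mu.
Proof.
  intros H1 H2 H3 H4 H5 H6.
  refine (conj (conj H1 (conj H2 (conj H3 (conj H4 (conj _ H5))))) H6).
  intros x y z t s Ht Hs.
  eapply Rle_trans; [apply H6; auto|].
  pose proof (H6 x z z (Rmax t s) (t+s)) as H.
  rewrite (proj2 (H3 z z) eq_refl (t+s)) in H by lra. rewrite Rmult_1_r in H.
  rewrite (Rmax_right (Rmax t s) (t+s)) in H. apply H.
  + apply (Rlt_le_trans _ t); auto; apply Rmax_l.
  + lra.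
  + apply Rmax_lub; lra.
Qed.

Definition cross {X Y : Type} (Mx : X -> X -> R -> R) (My : Y -> Y -> R -> R)
  (N : nat) (xs : nat -> X) (ys : nat -> Y) (r : R -> R) (a : X) (b : Y) (s : R) : R :=
  if Rle_dec s 0 then 0 else fmaxN (fun i => Mx a (xs i) s * r s * My (ys i) b s) N.

Definition Mu {X Y : Type} (Mx : X -> X -> R -> R) (My : Y -> Y -> R -> R)
  (N : nat) (xs : nat -> X) (ys : nat -> Y) (r : R -> R) (p q : X + Y) (s : R) : R :=
  match p, q with
  | inl a, inl b => Mx a b s
  | inr a, inr b => My a b s
  | inl a, inr b => cross Mx My N xs ys r a b s
  | inr b, inl a => cross Mx My N xs ys r a b s
  end.

Lemma cross_pos {X Y} Mx My N xs ys r (a : X) (b : Y) s : 0 < s ->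
  cross Mx My N xs ys r a b s = fmaxN (fun i => Mx a (xs i) s * r s * My (ys i) b s) N.
Proof. intros Hs. unfold cross. destruct Rle_dec; [lra|auto]. Qed.


Ltac nn := repeat apply Rmult_le_pos;
  try (match goal with H : _ |- _ =>
    solve [apply H; first [lra | (apply Rmax_lub; lra) | auto]] end).

Lemma cross_admissible (X Y : Type) (Mx : X -> X -> R -> R) (My : Y -> Y -> R -> R)
  (Hx : is_nA_fuzzy_metric_prod X Mx) (Hy : is_nA_fuzzy_metric_prod Y My)
  (N : nat) (xs : nat -> X) (ys : nat -> Y) (r : R -> R) (c : R)
  (Hr : forall u, 0 < u -> 0 <= r u <= c) (Hc : c < 1)
  (Hrm : forall u1 u2, 0 < u1 -> u1 <= u2 -> r u1 <= r u2)
  (Hrlc : forall u, 0 < u -> LC r u)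
  (Hk1 : forall u i j, 0 < u -> (i < N)%nat -> (j < N)%nat ->
     r u * r u * My (ys i) (ys j) u <= Mx (xs i) (xs j) u)
  (Hk2 : forall u i j, 0 < u -> (i < N)%nat -> (j < N)%nat ->
     r u * r u * Mx (xs i) (xs j) u <= My (ys i) (ys j) u) :
  admissible Mx My (Mu Mx My N xs ys r).
Proof.
  assert (Rx := fm_range X Mx Hx). assert (Ry := fm_range Y My Hy).
  assert (Sx := fm_sym X Mx Hx). assert (Sy := fm_sym Y My Hy).
  assert (Nx := fm_nA X Mx Hx). assert (Ny := fm_nA Y My Hy).
  assert (Ex := fm_self X Mx Hx). assert (Ey := fm_self Y My Hy).
  assert (Mox := fm_mono X Mx Hx). assert (Moy := fm_mono Y My Hy).
  assert (Tnn : forall a b i s, 0 < s -> 0 <= Mx a (xs i) s * r s * My (ys i) b s).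
  { intros. pose proof (Rx a (xs i) s ltac:(lra)). pose proof (Ry (ys i) b s ltac:(lra)).
    pose proof (Hr s H). repeat apply Rmult_le_pos; lra. }
  assert (Tle1 : forall a b i s, 0 < s -> Mx a (xs i) s * r s * My (ys i) b s <= 1).
  { intros. pose proof (Rx a (xs i) s ltac:(lra)). pose proof (Ry (ys i) b s ltac:(lra)).
    pose proof (Hr s H). replace 1 with (1*1*1) by ring. apply le3; lra. }
  assert (Crange : forall a b s, 0 <= s -> 0 <= cross Mx My N xs ys r a b s <= 1).
  { intros a b s Hs. unfold cross. destruct Rle_dec; [lra|]. split.
    - apply fmaxN_nonneg.
    - apply fmaxN_le; [lra|]. intros; apply Tle1; lra. }
  assert (Cle : forall a b s, 0 < s -> cross Mx My N xs ys r a b s <= c).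
  { intros a b s Hs. rewrite cross_pos by auto. apply fmaxN_le.
    - pose proof (Hr s Hs); lra.
    - intros i _. pose proof (Rx a (xs i) s ltac:(lra)). pose proof (Ry (ys i) b s ltac:(lra)).
      pose proof (Hr s Hs). replace c with (1 * c * 1) by ring. apply le3; lra. }
  assert (Cge : forall a b s i, 0 < s -> (i < N)%nat ->
     Mx a (xs i) s * r s * My (ys i) b s <= cross Mx My N xs ys r a b s).
  { intros. rewrite cross_pos by auto.
    apply (fmaxN_ge (fun i => Mx a (xs i) s * r s * My (ys i) b s)); auto. }
  assert (Cnn : forall a b s, 0 <= cross Mx My N xs ys r a b s).
  { intros. unfold cross. destruct Rle_dec; [lra|apply fmaxN_nonneg]. }
  assert (Ccases : forall a b s, 0 < s -> cross Mx My N xs ys r a b s = 0 \/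
     exists i, (i < N)%nat /\ cross Mx My N xs ys r a b s = Mx a (xs i) s * r s * My (ys i) b s).
  { intros a b s Hs. rewrite cross_pos by auto.
    apply (fmaxN_cases (fun i => Mx a (xs i) s * r s * My (ys i) b s)). }
  split; [|split; intros; reflexivity].
  apply nA_to_fm.
  - intros [a|a] [b|b] t Ht; simpl; auto.
  - intros [a|a] [b|b]; simpl; try apply fm_zero; auto;
    unfold cross; destruct Rle_dec; auto; lra.
  - intros [a|a] [b|b]; simpl; split; intro H.
    + f_equal. apply (fm_km2 X Mx Hx); auto.
    + injection H as ->. intros; apply Ex; auto.
    + exfalso. pose proof (Cle a b 1 ltac:(lra)). rewrite H in H0; lra.
    + discriminate.
    + exfalso. pose proof (Cle b a 1 ltac:(lra)). rewrite H in H0; lra.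
    + discriminate.
    + f_equal. apply (fm_km2 Y My Hy); auto.
    + injection H as ->. intros; apply Ey; auto.
  - intros [a|a] [b|b] t Ht; simpl; auto.
  - intros [a|a] [b|b] t Ht; simpl; [exact (fm_lc _ _ Hx a b t Ht)| | |exact (fm_lc _ _ Hy a b t Ht)].
    + apply (LC_ext (fun s => fmaxN (fun i => Mx a (xs i) s * r s * My (ys i) b s) N)); auto.
      * apply (LC_fmaxN (fun i s => Mx a (xs i) s * r s * My (ys i) b s)). intros i Hi.
        apply LC_mult; auto.
        -- intros s' Hs'. apply Rabs01. pose proof (Rx a (xs i) s' ltac:(lra)).
           pose proof (Hr s' Hs'). split; [nn|]. replace 1 with (1*1) by ring.
           apply Rmult_le_compat; lra.
        -- intros s' Hs'. apply Rabs01. apply Ry; lra.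
        -- apply LC_mult; auto.
           ++ intros s' Hs'. apply Rabs01. apply Rx; lra.
           ++ intros s' Hs'. apply Rabs01. pose proof (Hr s' Hs'). lra.
           ++ apply fm_lc; auto.
        -- apply fm_lc; auto.
      * intros; apply cross_pos; auto.
    + apply (LC_ext (fun s => fmaxN (fun i => Mx b (xs i) s * r s * My (ys i) a s) N)); auto.
      * apply (LC_fmaxN (fun i s => Mx b (xs i) s * r s * My (ys i) a s)). intros i Hi.
        apply LC_mult; auto.
        -- intros s' Hs'. apply Rabs01. pose proof (Rx b (xs i) s' ltac:(lra)).
           pose proof (Hr s' Hs'). split; [nn|]. replace 1 with (1*1) by ring.
           apply Rmult_le_compat; lra.
        -- intros s' Hs'. apply Rabs01. apply Ry; lra.
        -- apply LC_mult; auto.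
           ++ intros s' Hs'. apply Rabs01. apply Rx; lra.
           ++ intros s' Hs'. apply Rabs01. pose proof (Hr s' Hs'). lra.
           ++ apply fm_lc; auto.
        -- apply fm_lc; auto.
      * intros; apply cross_pos; auto.
  - intros [a|b] [a'|b'] [a''|b''] t s Ht Hs; simpl;
    assert (Htu : t <= Rmax t s) by apply Rmax_l;
    assert (Hsu : s <= Rmax t s) by apply Rmax_r;
    set (u := Rmax t s) in *;
    assert (Hu : 0 < u) by lra.
    + apply Nx; auto. unfold u; lra.
    +
      destruct (Ccases a' b'' s Hs) as [E|[i [Hi E]]]; rewrite E.
      { rewrite Rmult_0_r; apply Cnn. }
      eapply Rle_trans; [|apply (Cge a b'' u i); auto].
      rewrite <- !Rmult_assoc. apply le3; nn; fail.
    +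
      destruct (Ccases a b' t Ht) as [E|[i [Hi E]]]; rewrite E.
      { rewrite Rmult_0_l; nn. }
      destruct (Ccases a'' b' s Hs) as [E'|[j [Hj E']]]; rewrite E'.
      { rewrite Rmult_0_r; nn. }
      rewrite (Sx a'' (xs j) s) by lra. rewrite (Sy (ys j) b' s) by lra.
      apply Rle_trans with (Mx a (xs i) t * Mx (xs j) a'' s * Mx (xs i) (xs j) u).
      { replace (Mx a (xs i) t * r t * My (ys i) b' t * (Mx (xs j) a'' s * r s * My b' (ys j) s))
          with (Mx a (xs i) t * Mx (xs j) a'' s * (r t * r s * (My (ys i) b' t * My b' (ys j) s))) by ring.
        apply Rmult_le_compat_l; [nn|].
        apply Rle_trans with (r u * r u * My (ys i) (ys j) u); [|apply Hk1; auto].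
        apply Rmult_le_compat; nn; try (apply Rmult_le_compat; nn); fail. }
      replace (Mx a (xs i) t * Mx (xs j) a'' s * Mx (xs i) (xs j) u)
        with (Mx a (xs i) t * Mx (xs i) (xs j) u * Mx (xs j) a'' s) by ring.
      apply Rle_trans with (Mx a (xs j) u * Mx (xs j) a'' s).
      { apply Rmult_le_compat_r; [nn|]. apply Nx; auto. apply Rmax_lub; lra. }
      apply Nx; auto. apply Rmax_lub; lra.
    +
      destruct (Ccases a b' t Ht) as [E|[i [Hi E]]]; rewrite E.
      { rewrite Rmult_0_l; apply Cnn. }
      eapply Rle_trans; [|apply (Cge a b'' u i); auto].
      replace (Mx a (xs i) t * r t * My (ys i) b' t * My b' b'' s)
        with (Mx a (xs i) t * r t * (My (ys i) b' t * My b' b'' s)) by ring.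
      apply le3; nn; fail.
    +
      destruct (Ccases a' b t Ht) as [E|[i [Hi E]]]; rewrite E.
      { rewrite Rmult_0_l; apply Cnn. }
      eapply Rle_trans; [|apply (Cge a'' b u i); auto].
      replace (Mx a' (xs i) t * r t * My (ys i) b t * Mx a' a'' s)
        with (Mx a'' a' s * Mx a' (xs i) t * r t * My (ys i) b t)
        by (rewrite (Sx a' a'' s) by lra; ring).
      apply le3; nn; fail.
    +
      destruct (Ccases a' b t Ht) as [E|[i [Hi E]]]; rewrite E.
      { rewrite Rmult_0_l; nn. }
      destruct (Ccases a' b'' s Hs) as [E'|[j [Hj E']]]; rewrite E'.
      { rewrite Rmult_0_r; nn. }
      rewrite (Sx a' (xs i) t) by lra. rewrite (Sy (ys i) b t) by lra.
      apply Rle_trans with (My b (ys i) t * My (ys j) b'' s * My (ys i) (ys j) u).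
      { replace (Mx (xs i) a' t * r t * My b (ys i) t * (Mx a' (xs j) s * r s * My (ys j) b'' s))
          with (My b (ys i) t * My (ys j) b'' s * (r t * r s * (Mx (xs i) a' t * Mx a' (xs j) s))) by ring.
        apply Rmult_le_compat_l; [nn|].
        apply Rle_trans with (r u * r u * Mx (xs i) (xs j) u); [|apply Hk2; auto].
        apply Rmult_le_compat; nn; try (apply Rmult_le_compat; nn); fail. }
      replace (My b (ys i) t * My (ys j) b'' s * My (ys i) (ys j) u)
        with (My b (ys i) t * My (ys i) (ys j) u * My (ys j) b'' s) by ring.
      apply Rle_trans with (My b (ys j) u * My (ys j) b'' s).
      { apply Rmult_le_compat_r; [nn|]. apply Ny; auto. apply Rmax_lub; lra. }
      apply Ny; auto. apply Rmax_lub; lra.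
    +
      destruct (Ccases a'' b' s Hs) as [E|[i [Hi E]]]; rewrite E.
      { rewrite Rmult_0_r; apply Cnn. }
      eapply Rle_trans; [|apply (Cge a'' b u i); auto].
      replace (My b b' t * (Mx a'' (xs i) s * r s * My (ys i) b' s))
        with (Mx a'' (xs i) s * r s * (My (ys i) b' s * My b' b t))
        by (rewrite (Sy b b' t) by lra; ring).
      apply le3; nn; fail.
    + apply Ny; auto. unfold u; lra.
Qed.

Lemma HM_bound (X Y : Type) (Mx : X -> X -> R -> R) (My : Y -> Y -> R -> R)
  (Hx : is_nA_fuzzy_metric_prod X Mx) (Hy : is_nA_fuzzy_metric_prod Y My)
  (N : nat) (xs : nat -> X) (ys : nat -> Y) (r : R -> R) (c t' L : R)
  (Had : admissible Mx My (Mu Mx My N xs ys r))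
  (Ht : 0 < t') (Hrt : r t' = c) (Hc : 0 <= c)
  (HX : inhabited X) (HY : inhabited Y)
  (NX : forall a, exists i, (i < N)%nat /\ L < Mx a (xs i) t')
  (NY : forall b, exists i, (i < N)%nat /\ L < My b (ys i) t') :
  exists h, H_M (Mu Mx My N xs ys r) t' = Finite h /\ L * c <= h.
Proof.
  destruct Had as [Hmu _].
  assert (Rmu := fm_range _ _ Hmu).
  assert (Cg : forall a b i, (i < N)%nat -> Mx a (xs i) t' * r t' * My (ys i) b t' <= cross Mx My N xs ys r a b t').
  { intros. rewrite cross_pos by auto.
    apply (fmaxN_ge (fun i => Mx a (xs i) t' * r t' * My (ys i) b t')); auto. }
  assert (F1 : forall a, L * c <= real (sup_img (fun b : Y => Mu Mx My N xs ys r (inl a) (inr b) t'))).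
  { intros a. destruct (NX a) as [i [Hi Hl]].
    unfold sup_img.
    destruct (lub_bounded (fun v => exists b, v = Mu Mx My N xs ys r (inl a) (inr b) t')
       (Mu Mx My N xs ys r (inl a) (inr (ys i)) t') 1) as [l [E [_ Hle]]].
    - exists (ys i); reflexivity.
    - intros v [b ->]. apply Rmu; lra.
    - rewrite E. simpl.
      apply Rle_trans with (Mu Mx My N xs ys r (inl a) (inr (ys i)) t'); [|apply Hle; eexists; reflexivity].
      simpl. eapply Rle_trans; [|apply Cg; eauto].
      rewrite Hrt, (fm_self Y My Hy (ys i) t' Ht). rewrite Rmult_1_r.
      apply Rmult_le_compat_r; lra. }
  assert (F2 : forall b, L * c <= real (sup_img (fun a : X => Mu Mx My N xs ys r (inl a) (inr b) t'))).
  { intros b. destruct (NY b) as [i [Hi Hl]].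
    unfold sup_img.
    destruct (lub_bounded (fun v => exists a, v = Mu Mx My N xs ys r (inl a) (inr b) t')
       (Mu Mx My N xs ys r (inl (xs i)) (inr b) t') 1) as [l [E [_ Hle]]].
    - exists (xs i); reflexivity.
    - intros v [a ->]. apply Rmu; lra.
    - rewrite E. simpl.
      apply Rle_trans with (Mu Mx My N xs ys r (inl (xs i)) (inr b) t'); [|apply Hle; eexists; reflexivity].
      simpl. eapply Rle_trans; [|apply Cg; eauto].
      rewrite Hrt, (fm_self X Mx Hx (xs i) t' Ht). rewrite Rmult_1_l.
      rewrite (fm_sym Y My Hy (ys i) b t') by lra. nra. }
  destruct HX as [a0]. destruct HY as [b0].
  unfold H_M, inf_img.
  destruct (glb_bounded (fun v => exists a : X, v = real (sup_img (fun b : Y => Mu Mx My N xs ys r (inl a) (inr b) t')))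
     (real (sup_img (fun b : Y => Mu Mx My N xs ys r (inl a0) (inr b) t'))) (L * c)) as [h1 [E1 H1]].
  { exists a0; reflexivity. }
  { intros v [a ->]. apply F1. }
  destruct (glb_bounded (fun v => exists b : Y, v = real (sup_img (fun a : X => Mu Mx My N xs ys r (inl a) (inr b) t')))
     (real (sup_img (fun a : X => Mu Mx My N xs ys r (inl a) (inr b0) t'))) (L * c)) as [h2 [E2 H2]].
  { exists b0; reflexivity. }
  { intros v [b ->]. apply F2. }
  rewrite E1, E2. simpl. exists (Rmin h1 h2). split; [reflexivity|]. apply Rmin_glb; auto.
Qed.

Lemma common_delta1 (t : R) (Q : nat -> R -> Prop) (N : nat) :
  (forall i, (i < N)%nat -> exists d, 0 < d /\ forall u, t - d < u -> u <= t -> Q i u) ->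
  exists d, 0 < d /\ forall i, (i < N)%nat -> forall u, t - d < u -> u <= t -> Q i u.
Proof.
  induction N; intros H.
  - exists 1. split; [lra|]. intros; lia.
  - destruct IHN as [d1 [Hd1 H1]]; [intros; apply H; lia|].
    destruct (H N) as [d2 [Hd2 H2]]; [lia|].
    exists (Rmin d1 d2). split; [apply Rmin_pos; auto|].
    pose proof (Rmin_l d1 d2); pose proof (Rmin_r d1 d2).
    intros i Hi u Hl Hr. destruct (Nat.eq_dec i N) as [->|Hne].
    + apply H2; lra.
    + apply H1; [lia|lra|lra].
Qed.

Lemma common_delta2 (t : R) (P : nat -> nat -> R -> Prop) (N : nat) :
  (forall i l, (i < N)%nat -> (l < N)%nat -> exists d, 0 < d /\ forall u, t - d < u -> u <= t -> P i l u) ->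
  exists d, 0 < d /\ forall i l, (i < N)%nat -> (l < N)%nat -> forall u, t - d < u -> u <= t -> P i l u.
Proof.
  intros H.
  destruct (common_delta1 t (fun i u => forall l, (l < N)%nat -> P i l u) N) as [d [Hd Hq]].
  - intros i Hi. destruct (common_delta1 t (fun l u => P i l u) N) as [d [Hd Hq]].
    + intros l Hl. apply H; auto.
    + exists d. split; [exact Hd|]. intros u H1 H2 l Hl. apply Hq; auto.
  - exists d. split; [exact Hd|]. intros i l Hi Hl u H1 H2. apply (Hq i Hi u H1 H2); auto.
Qed.

Lemma close_left (a b : R -> R) (t k : R) :
  0 < t -> 0 <= k <= 1 -> LC a t -> LC b t -> k * b t < a t -> k * a t < b t ->
  exists d, 0 < d /\ forall u, t - d < u -> u <= t -> k * b u <= a u /\ k * a u <= b u.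
Proof.
  intros Ht Hk La Lb H1 H2.
  set (e := Rmin (a t - k * b t) (b t - k * a t) / 2).
  assert (0 < Rmin (a t - k * b t) (b t - k * a t)) by (apply Rmin_glb_lt; lra).
  assert (He : 0 < e) by (unfold e; lra).
  assert (Hea : e <= (a t - k * b t) / 2) by (unfold e; pose proof (Rmin_l (a t - k * b t) (b t - k * a t)); lra).
  assert (Heb : e <= (b t - k * a t) / 2) by (unfold e; pose proof (Rmin_r (a t - k * b t) (b t - k * a t)); lra).
  destruct (La e He) as [d1 [Hd1 A]]. destruct (Lb e He) as [d2 [Hd2 B]].
  exists (Rmin (Rmin d1 d2) t). split; [apply Rmin_pos; [apply Rmin_pos|]; auto|].
  intros u Hl Hr.
  pose proof (Rmin_l d1 d2); pose proof (Rmin_r d1 d2).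
  pose proof (Rmin_l (Rmin d1 d2) t); pose proof (Rmin_r (Rmin d1 d2) t).
  specialize (A u ltac:(lra) ltac:(lra) Hr). specialize (B u ltac:(lra) ltac:(lra) Hr).
  apply Rabs_def2 in A. apply Rabs_def2 in B. split; nra.
Qed.

Lemma pair_good (X : nat -> Type) (M : forall n, X n -> X n -> R -> R)
  (Hfm : forall n, is_nA_fuzzy_metric_prod (X n) (M n))
  (Hne : forall n, inhabited (X n))
  (C : R -> R)
  (HCmono : forall s1 s2, 0 < s1 -> s1 <= s2 -> C s1 <= C s2)
  (HClc : forall s, 0 < s -> forall e, 0 < e -> exists d, 0 < d /\
            forall u, 0 < u -> s - d < u -> u <= s -> Rabs (C u - C s) < e)
  (HCrange : forall s, 0 < s -> 0 < C s <= 1)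
  (HCle : forall s n x y, 0 < s -> C s <= M n x y s)
  (t eps : R) (Ht : 0 < t) (Heps : 0 < eps < 1) (N : nat) (xs : forall n, nat -> X n)
  (Hnet : forall n, is_net (M n) t eps N (xs n))
  (Hrat : forall n m s i j, t < s -> (i < N)%nat -> (j < N)%nat ->
          M n (xs n i) (xs n j) s < M m (xs m i) (xs m j) s ->
          M n (xs n i) (xs n j) s / M m (xs m i) (xs m j) s >=
          M n (xs n i) (xs n j) t / M m (xs m i) (xs m j) t)
  (n m : nat)
  (Hcl : forall i l, (i < N)%nat -> (l < N)%nat ->
     (1 - eps/2) * (1 - eps/2) * M m (xs m i) (xs m l) t < M n (xs n i) (xs n l) t /\
     (1 - eps/2) * (1 - eps/2) * M n (xs n i) (xs n l) t < M m (xs m i) (xs m l) t) :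
  forall t', t <= t' -> Rbar_lt (Finite ((1 - eps) ^ 2)) (M_GH (M n) (M m) t').
Proof.
  intros t' Htt.
  set (c := 1 - eps/2) in *.
  assert (Hc : 1 - eps < c < 1) by (unfold c; lra).
  assert (Rn := fm_range _ _ (Hfm n)). assert (Rm := fm_range _ _ (Hfm m)).
  destruct (common_delta2 t (fun i l u => c * c * M m (xs m i) (xs m l) u <= M n (xs n i) (xs n l) u /\
                                          c * c * M n (xs n i) (xs n l) u <= M m (xs m i) (xs m l) u) N)
    as [d [Hd Hcd]].
  { intros i l Hi Hl. destruct (Hcl i l Hi Hl) as [H1 H2].
    apply close_left; auto.
    - split; nra.
    - apply fm_lc; auto.
    - apply fm_lc; auto. }
  set (u0 := Rmax (t - d) (t / 2)).
  assert (Hu0a : t - d <= u0) by apply Rmax_l.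
  assert (Hu0b : t / 2 <= u0) by apply Rmax_r.
  assert (Hu0c : u0 < t) by (unfold u0; apply Rmax_lub_lt; lra).
  set (r := fun u => if Rle_dec u u0 then c * C u else c).
  assert (Hr : forall u, 0 < u -> 0 <= r u <= c).
  { intros u Hu. unfold r. destruct Rle_dec; [pose proof (HCrange u Hu); split; nra | lra]. }
  assert (Hrm : forall u1 u2, 0 < u1 -> u1 <= u2 -> r u1 <= r u2).
  { intros u1 u2 H1 H2. unfold r. pose proof (HCrange u1 H1). pose proof (HCmono u1 u2 H1 H2).
    destruct (Rle_dec u1 u0); destruct (Rle_dec u2 u0); nra. }
  assert (Hrlc : forall u, 0 < u -> LC r u).
  { intros u Hu e He. unfold r. destruct (Rle_dec u u0).
    - destruct (HClc u Hu e He) as [d1 [Hd1 H1]].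
      exists (Rmin d1 u). split; [apply Rmin_pos; auto|].
      pose proof (Rmin_l d1 u); pose proof (Rmin_r d1 u).
      intros s Hs Hl Hrr. destruct (Rle_dec s u0); [|lra].
      replace (c * C s - c * C u) with (c * (C s - C u)) by ring.
      rewrite Rabs_mult, Rabs_pos_eq by lra.
      specialize (H1 s ltac:(lra) ltac:(lra) Hrr).
      pose proof (Rabs_pos (C s - C u)). nra.
    - exists (u - u0). split; [lra|]. intros s Hs Hl Hrr.
      destruct (Rle_dec s u0); [lra|]. rewrite Rminus_diag, Rabs_R0; auto. }
  assert (Hkey : forall n m, (forall i l, (i < N)%nat -> (l < N)%nat -> forall u, u0 < u -> u <= t ->
        c * c * M m (xs m i) (xs m l) u <= M n (xs n i) (xs n l) u) ->
      (forall i l, (i < N)%nat -> (l < N)%nat ->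
        c * c * M m (xs m i) (xs m l) t < M n (xs n i) (xs n l) t) ->
      forall u i l, 0 < u -> (i < N)%nat -> (l < N)%nat ->
        r u * r u * M m (xs m i) (xs m l) u <= M n (xs n i) (xs n l) u).
  { intros n' m' Hmid Hat u i l Hu Hi Hl.
    pose proof (Rm' := fm_range _ _ (Hfm m') (xs m' i) (xs m' l) u ltac:(lra)).
    pose proof (Rn' := fm_range _ _ (Hfm n') (xs n' i) (xs n' l) u ltac:(lra)).
    pose proof (HCle u n' (xs n' i) (xs n' l) Hu).
    pose proof (HCle u m' (xs m' i) (xs m' l) Hu).
    pose proof (HCrange u Hu).
    unfold r. destruct (Rle_dec u u0).
    - assert (0 <= c * C u <= C u) by (split; nra).
      assert (0 <= c * C u * (c * C u) <= C u * C u)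
        by (split; [apply Rmult_le_pos; lra | apply Rmult_le_compat; lra]).
      assert (c * C u * (c * C u) * M m' (xs m' i) (xs m' l) u <= C u * C u * 1)
        by (apply Rmult_le_compat; lra).
      nra.
    - destruct (Rle_dec u t).
      + apply Hmid; auto; lra.
      + destruct (Rlt_dec (M n' (xs n' i) (xs n' l) u) (M m' (xs m' i) (xs m' l) u)) as [Hlt|Hge].
        * pose proof (Hrat n' m' u i l ltac:(lra) Hi Hl Hlt) as Hq.
          pose proof (Hat i l Hi Hl) as Ha.
          pose proof (HCle t n' (xs n' i) (xs n' l) Ht).
          pose proof (HCle t m' (xs m' i) (xs m' l) Ht).
          pose proof (HCrange t Ht).
          set (A := M n' (xs n' i) (xs n' l) u) in *.
          set (B := M m' (xs m' i) (xs m' l) u) in *.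
          set (A0 := M n' (xs n' i) (xs n' l) t) in *.
          set (B0 := M m' (xs m' i) (xs m' l) t) in *.
          assert (EA : A = (A / B) * B) by (field; lra).
          assert (EA0 : A0 = (A0 / B0) * B0) by (field; lra).
          set (q := A / B) in *. set (p := A0 / B0) in *.
          assert (c * c < p) by nra.
          nra.
        * apply Rnot_lt_le in Hge.
          assert (0 <= c * c <= 1) by (split; nra).
          nra. }
  assert (Had : admissible (M n) (M m) (Mu (M n) (M m) N (xs n) (xs m) r)).
  { apply (cross_admissible _ _ _ _ (Hfm n) (Hfm m) N (xs n) (xs m) r c); auto; try lra.
    - apply Hkey.
      + intros i l Hi Hl u H1 H2. apply (proj1 (Hcd i l Hi Hl u ltac:(lra) H2)).
      + intros i l Hi Hl. apply (Hcl i l Hi Hl).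
    - apply Hkey.
      + intros i l Hi Hl u H1 H2. apply (proj2 (Hcd i l Hi Hl u ltac:(lra) H2)).
      + intros i l Hi Hl. apply (Hcl i l Hi Hl). }
  destruct (HM_bound _ _ (M n) (M m) (Hfm n) (Hfm m) N (xs n) (xs m) r c t' (1 - eps) Had)
    as [h [Eh Hh]]; auto.
  - lra.
  - unfold r. destruct Rle_dec; lra.
  - lra.
  - intros a. destruct (Hnet n a) as [i [Hi Hv]]. exists i. split; auto.
    eapply Rlt_le_trans; [exact Hv|]. apply fm_mono; auto.
  - intros b. destruct (Hnet m b) as [i [Hi Hv]]. exists i. split; auto.
    eapply Rlt_le_trans; [exact Hv|]. apply fm_mono; auto.
  - unfold M_GH. destruct (Lub_Rbar_correct (fun v => exists Mu0, admissible (M n) (M m) Mu0 /\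
        Finite v = H_M Mu0 t')) as [Hub _].
    eapply Rbar_lt_le_trans; [|apply Hub; exists (Mu (M n) (M m) N (xs n) (xs m) r); split; [exact Had| rewrite Eh; reflexivity]].
    simpl. nra.
Qed.

From Stdlib Require Import ClassicalEpsilon Classical ZArith.
Open Scope R_scope.

Lemma si_mono f : strictly_increasing f -> forall a b, (a < b)%nat -> (f a < f b)%nat.
Proof.
  intros H a b Hab. induction Hab.
  - apply H.
  - pose proof (H m). lia.
Qed.

Lemma si_ge f : strictly_increasing f -> forall k, (k <= f k)%nat.
Proof. intros H k. induction k; [lia|]. pose proof (H k). lia. Qed.

Lemma si_comp f g : strictly_increasing f -> strictly_increasing g ->
  strictly_increasing (fun k => f (g k)).
Proof. intros Hf Hg k. apply si_mono; auto. Qed.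

Lemma si_id : strictly_increasing (fun k => k).
Proof. intros k; lia. Qed.

Lemma inf_often_aux (f : nat -> nat) (B : nat) : forall m0,
  (forall n, (m0 <= n)%nat -> (f n <= B)%nat) ->
  exists v, forall m, exists n, (m <= n)%nat /\ f n = v.
Proof.
  induction B; intros m0 H.
  - exists 0%nat. intros m. exists (Nat.max m m0). split; [lia|].
    specialize (H (Nat.max m m0) ltac:(lia)). lia.
  - destruct (classic (forall m, exists n, (m <= n)%nat /\ f n = S B)) as [Hc|Hc].
    + exists (S B); exact Hc.
    + apply not_all_ex_not in Hc. destruct Hc as [m1 Hm1].
      apply (IHB (Nat.max m0 m1)). intros n Hn.
      specialize (H n ltac:(lia)).
      assert (f n <> S B) by (intro E; apply Hm1; exists n; split; [lia|auto]). lia.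
Qed.

Lemma extract (P : nat -> Prop) : (forall m, exists n, (m <= n)%nat /\ P n) ->
  exists th, strictly_increasing th /\ forall k, P (th k).
Proof.
  intros H.
  set (g := fun m => proj1_sig (constructive_indefinite_description _ (H m))).
  assert (Hg : forall m, (m <= g m)%nat /\ P (g m)).
  { intros m. unfold g. destruct (constructive_indefinite_description _ (H m)); auto. }
  exists (fix th k := match k with O => g O | S k' => g (S (th k')) end).
  split.
  - intros k. simpl. destruct (Hg (S ((fix th (k : nat) : nat := match k with
                                     | 0%nat => g 0%nat | S k' => g (S (th k')) end) k))). lia.
  - intros k. destruct k; simpl; apply Hg.
Qed.

Lemma pigeon (f : nat -> nat) (B : nat) : (forall n, (f n <= B)%nat) ->
  exists th, strictly_increasing th /\ forall j k, f (th j) = f (th k).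
Proof.
  intros H. destruct (inf_often_aux f B 0%nat) as [v Hv]; [intros; auto|].
  destruct (extract (fun n => f n = v) Hv) as [th [Hth Hp]].
  exists th. split; auto. intros j k. rewrite !Hp; auto.
Qed.

Lemma refine_list (A : Type) (G : A -> nat -> nat) (B : nat) (HB : forall p n, (G p n <= B)%nat) :
  forall L : list A, exists th, strictly_increasing th /\
    forall p, In p L -> forall j k, G p (th j) = G p (th k).
Proof.
  induction L as [|p L IH].
  - exists (fun k => k). split; [apply si_id|]. intros p [].
  - destruct IH as [th1 [Hth1 H1]].
    destruct (pigeon (fun k => G p (th1 k)) B) as [th2 [Hth2 H2]]; [intros; auto|].
    exists (fun k => th1 (th2 k)). split; [apply si_comp; auto|].
    intros q [<-|Hq] j k.
    + apply H2.
    + apply H1; auto.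
Qed.

Lemma bucket_close (v w h : R) : 0 <= v -> 0 <= w -> 0 < h ->
  Z.to_nat (up (v / h)) = Z.to_nat (up (w / h)) -> Rabs (v - w) < h.
Proof.
  intros Hv Hw Hh E.
  destruct (archimed (v / h)) as [A1 A2]. destruct (archimed (w / h)) as [B1 B2].
  assert (0 <= v / h) by (apply Rmult_le_pos; [lra| left; apply Rinv_0_lt_compat; lra]).
  assert (0 <= w / h) by (apply Rmult_le_pos; [lra| left; apply Rinv_0_lt_compat; lra]).
  assert (0 < up (v / h))%Z by (apply lt_IZR; lra).
  assert (0 < up (w / h))%Z by (apply lt_IZR; lra).
  apply Z2Nat.inj in E; try lia. rewrite E in A1, A2.
  assert (Hd : Rabs (v / h - w / h) < 1) by (apply Rabs_def1; lra).
  replace (v - w) with (h * (v / h - w / h)) by (field; lra).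
  rewrite Rabs_mult, Rabs_pos_eq by lra. nra.
Qed.

Lemma bucket_bound (v h : R) : 0 <= v <= 1 -> 0 < h ->
  (Z.to_nat (up (v / h)) <= Z.to_nat (up (1 / h)))%nat.
Proof.
  intros Hv Hh.
  destruct (archimed (v / h)) as [A1 A2]. destruct (archimed (1 / h)) as [B1 B2].
  assert (0 <= v / h) by (apply Rmult_le_pos; [lra| left; apply Rinv_0_lt_compat; lra]).
  assert (v / h <= 1 / h) by (unfold Rdiv; apply Rmult_le_compat_r; [left; apply Rinv_0_lt_compat|]; lra).
  assert (0 < up (v / h))%Z by (apply lt_IZR; lra).
  assert (up (v / h) < up (1 / h) + 1)%Z by (apply lt_IZR; rewrite plus_IZR; simpl; lra).
  apply Z2Nat.inj_le; lia.
Qed.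

Fixpoint Psi (sel : (nat -> nat) * nat -> nat -> nat) (K : nat) : nat -> nat :=
  match K with
  | O => fun n => n
  | S K' => fun n => Psi sel K' (sel (Psi sel K', K') n)
  end.

Lemma Psi_range sel K : forall d n, exists m, Psi sel (S K + d) n = Psi sel (S K) m.
Proof.
  induction d; intros n.
  - exists n. rewrite Nat.add_0_r. reflexivity.
  - rewrite Nat.add_succ_r. simpl (Psi sel (S (S K + d)) n).
    destruct (IHd (sel (Psi sel (S K + d), (S K + d)%nat) n)) as [m Hm].
    exists m. exact Hm.
Qed.

Theorem mainTheorem8
  (X : nat -> Type) (M : forall n, X n -> X n -> R -> R)
  (Hfm : forall n, is_nA_fuzzy_metric_prod (X n) (M n))
  (Hne : forall n, inhabited (X n))
  (Hcpt : forall n, f_compact_space (X n) (M n))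
  (* (1) *)
  (C : R -> R)
  (HCmono : forall s1 s2, 0 < s1 -> s1 <= s2 -> C s1 <= C s2)
  (HClc : forall s, 0 < s -> forall e, 0 < e -> exists d, 0 < d /\
            forall u, 0 < u -> s - d < u -> u <= s -> Rabs (C u - C s) < e)
  (HCrange : forall s, 0 < s -> 0 < C s <= 1)
  (HCdiam : forall s n, 0 < s -> Rbar_le (Finite (C s)) (diam_s (M n) s))
  (* (2) *)
  (Nf : R -> R -> nat)
  (HCov : forall t eps, 0 < t -> 0 < eps < 1 ->
            forall n k, Cov_is (M n) eps t k -> (k <= Nf eps t)%nat)
  (* (3) *)
  (Hnets : forall t eps, 0 < t -> 0 < eps < 1 ->
     exists xs : forall n, nat -> X n,
       (forall n, is_net (M n) t eps (Nf eps t) (xs n)) /\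
       (forall n m s i j, t < s -> (i < Nf eps t)%nat -> (j < Nf eps t)%nat ->
          M n (xs n i) (xs n j) s < M m (xs m i) (xs m j) s ->
          M n (xs n i) (xs n j) s / M m (xs m i) (xs m j) s >=
          M n (xs n i) (xs n j) t / M m (xs m i) (xs m j) t)) :
  (forall t eps, 0 < t -> 0 < eps < 1 ->
     exists phi : nat -> nat, strictly_increasing phi /\
       forall j k, Rbar_lt (Finite ((1 - eps) ^ 2)) (M_GH (M (phi j)) (M (phi k)) t)) /\
  (exists phi : nat -> nat, strictly_increasing phi /\
     GH_Cauchy (fun k => X (phi k)) (fun k => M (phi k))).
Proof.
  assert (HCle : forall s n x y, 0 < s -> C s <= M n x y s).
  { intros s n x y Hs. pose proof (HCdiam s n Hs) as H. unfold diam_s, inf_img in H.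
    assert (H2 := glb_le (fun v => exists p : X n * X n, v = M n (fst p) (snd p) s) (M n x y s)
                   (ex_intro _ (x, y) eq_refl)).
    exact (Rbar_le_trans (Finite (C s)) _ (Finite (M n x y s)) H H2). }
  assert (core : forall psi, strictly_increasing psi -> forall t eps, 0 < t -> 0 < eps < 1 ->
     exists th, strictly_increasing th /\ forall j k t', t <= t' ->
       Rbar_lt (Finite ((1 - eps) ^ 2)) (M_GH (M (psi (th j))) (M (psi (th k))) t')).
  { intros psi Hpsi t eps Ht Heps.
    destruct (Hnets t eps Ht Heps) as [xs [Hnet Hrat]].
    pose proof (HCrange t Ht) as HCt.
    assert (Hc2 : 0 < 1 - (1 - eps/2) * (1 - eps/2)) by nra.
    set (h := C t * (1 - (1 - eps/2) * (1 - eps/2))).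
    assert (Hh : 0 < h) by (unfold h; apply Rmult_lt_0_compat; lra).
    set (G := fun (p : nat * nat) n =>
      Z.to_nat (up (M (psi n) (xs (psi n) (fst p)) (xs (psi n) (snd p)) t / h))).
    destruct (refine_list _ G (Z.to_nat (up (1 / h))) ltac:(intros p n; apply bucket_bound;
       [apply (fm_range _ _ (Hfm _)); lra | exact Hh])
       (list_prod (seq 0 (Nf eps t)) (seq 0 (Nf eps t)))) as [th [Hth Hg]].
    exists th. split; [exact Hth|]. intros j k t' Htt.
    apply (pair_good X M Hfm Hne C HCmono HClc HCrange HCle t eps Ht Heps (Nf eps t) xs Hnet Hrat); auto.
    intros i l Hi Hl.
    assert (Hin : In (i, l) (list_prod (seq 0 (Nf eps t)) (seq 0 (Nf eps t))))
      by (apply in_prod; apply in_seq; lia).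
    pose proof (Hg (i, l) Hin j k) as E. unfold G in E; simpl in E.
    apply bucket_close in E; [| apply (fm_range _ _ (Hfm _)); lra | apply (fm_range _ _ (Hfm _)); lra | exact Hh].
    pose proof (HCle t (psi (th j)) (xs (psi (th j)) i) (xs (psi (th j)) l) Ht).
    pose proof (HCle t (psi (th k)) (xs (psi (th k)) i) (xs (psi (th k)) l) Ht).
    apply Rabs_def2 in E. unfold h in E. split; nra. }
  split.
  - intros t eps Ht Heps. destruct (core (fun k => k) si_id t eps Ht Heps) as [th [Hth H]].
    exists th. split; auto. intros j k. apply H; lra.
  - set (tK := fun K : nat => / (INR K + 1)).
    set (eK := fun K : nat => / (INR K + 2)).
    assert (HtK : forall K, 0 < tK K) by (intros; unfold tK; apply Rinv_0_lt_compat; pose proof (pos_INR K); lra).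
    assert (HeK : forall K, 0 < eK K < 1).
    { intros K; unfold eK; pose proof (pos_INR K). split; [apply Rinv_0_lt_compat; lra|].
      rewrite <- Rinv_1. apply Rinv_lt_contravar; lra. }
    assert (Hsel : forall p : (nat -> nat) * nat, exists th, strictly_increasing (fst p) ->
       strictly_increasing th /\ forall j k t', tK (snd p) <= t' ->
       Rbar_lt (Finite ((1 - eK (snd p)) ^ 2)) (M_GH (M (fst p (th j))) (M (fst p (th k))) t')).
    { intros [psi K]. simpl. destruct (classic (strictly_increasing psi)) as [Hp|Hp].
      - destruct (core psi Hp (tK K) (eK K) (HtK K) (HeK K)) as [th Hth].
        exists th; intros _; exact Hth.
      - exists (fun k => k). intros Hc; contradiction. }
    set (sel := fun p => proj1_sig (constructive_indefinite_description _ (Hsel p))).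
    assert (Hs : forall p, strictly_increasing (fst p) -> strictly_increasing (sel p) /\
       forall j k t', tK (snd p) <= t' ->
       Rbar_lt (Finite ((1 - eK (snd p)) ^ 2)) (M_GH (M (fst p (sel p j))) (M (fst p (sel p k))) t')).
    { intros p. unfold sel. destruct (constructive_indefinite_description _ (Hsel p)); auto. }
    assert (HPs : forall K, strictly_increasing (Psi sel K)).
    { induction K; simpl; [apply si_id|].
      apply si_comp; auto. apply (Hs (Psi sel K, K) IHK). }
    exists (fun k => Psi sel k k). split.
    + intros k. simpl.
      pose proof (si_ge _ (proj1 (Hs (Psi sel k, k) (HPs k))) (S k)).
      apply si_mono; [apply HPs | lia].
    + intros t eps Ht Heps. cbv beta.
      set (m0 := Rmin t (eps / 2)).
      assert (Hm0 : 0 < m0) by (unfold m0; apply Rmin_pos; lra).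
      destruct (archimed (/ m0)) as [A1 _].
      assert (Hup : (0 < up (/ m0))%Z) by (apply lt_IZR; pose proof (Rinv_0_lt_compat m0 Hm0); lra).
      set (K := Z.to_nat (up (/ m0))).
      assert (HK : INR K = IZR (up (/ m0))) by (unfold K; rewrite INR_IZR_INZ, Z2Nat.id; [reflexivity|lia]).
      assert (HtKm : tK K < m0).
      { unfold tK. rewrite <- (Rinv_inv m0). apply Rinv_lt_contravar.
        - apply Rmult_lt_0_compat; [apply Rinv_0_lt_compat; auto| pose proof (pos_INR K); lra].
        - lra. }
      assert (HeKt : eK K <= tK K).
      { unfold eK, tK. pose proof (pos_INR K). apply Rinv_le_contravar; lra. }
      assert (Hm0t : m0 <= t) by (unfold m0; apply Rmin_l).
      assert (Hm0e : m0 <= eps / 2) by (unfold m0; apply Rmin_r).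
      exists (S K). intros n n' Hn Hn'.
      destruct (Psi_range sel K (n - S K) n) as [m1 Hm1].
      destruct (Psi_range sel K (n' - S K) n') as [m2 Hm2].
      replace (S K + (n - S K))%nat with n in Hm1 by lia.
      replace (S K + (n' - S K))%nat with n' in Hm2 by lia.
      rewrite Hm1, Hm2.
      destruct (Hs (Psi sel K, K) (HPs K)) as [_ Hgood].
      change (Psi sel (S K) m1) with (Psi sel K (sel (Psi sel K, K) m1)).
      change (Psi sel (S K) m2) with (Psi sel K (sel (Psi sel K, K) m2)).
      eapply Rbar_le_lt_trans; [|exact (Hgood m1 m2 t ltac:(change (tK K <= t); lra))].
      simpl. pose proof (HeK K). nra.
Qed.
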